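(* Let $n<\omega$, let $L\in\mathbf{M}_n$ and let $P$ be its dual $pm$-space. Then $L$ is simple if and only if $P=Q\cup\zeta(Q)$ for some order component $Q$ of $P$.
   Context: $\mathbf{M}_n$ is the variety of regular pseudocomplemented de Morgan algebras of range $n$: algebras $(L;\wedge,\vee,{}^\ast,{}^\prime,0,1)$ with bounded distributive lattice reduct, pseudocomplement ${}^\ast$, de Morgan involution ${}^\prime$, satisfying $x\wedge x^{\prime\ast\prime}\le y\vee y^\ast$ and $(x\wedge x^{\prime\ast})^{n(\prime\ast)}=(x\wedge x^{\prime\ast})^{(n+1)(\prime\ast)}$, where $x^{0(\prime\ast)}=x$, $x^{(k+1)(\prime\ast)}=((x^{k(\prime\ast)})')^\ast$. Simple algebras are non-trivial. The dual $pm$-space is the Priestley space $(P;\tau,\le)$ of prime ideals with involution $\zeta(I)=\{a:a'\notin I\}$. An order component of $P$ is a maximal subset any two elements of which are joined by a finite path in the comparability graph of $(P;\le)$. *)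

(* Defs.v *)
From Stdlib Require Import Relations.

Set Implicit Arguments.
Arguments clos_refl_trans {A}.

Record pmAlgebra := PmAlgebra {
  car :> Type;
  meet : car -> car -> car;
  join : car -> car -> car;
  pc   : car -> car;
  neg  : car -> car;
  bot  : car;
  top  : car;
  meetA : forall a b c, meet a (meet b c) = meet (meet a b) c;
  joinA : forall a b c, join a (join b c) = join (join a b) c;
  meetC : forall a b, meet a b = meet b a;
  joinC : forall a b, join a b = join b a;
  meet_join_absorb : forall a b, meet a (join a b) = a;
  join_meet_absorb : forall a b, join a (meet a b) = a;
  meet_joinDr : forall a b c, meet a (join b c) = join (meet a b) (meet a c);
  join_bot : forall a, join a bot = a;
  meet_top : forall a, meet a top = a;
  pcP : forall a b, meet b (pc a) = b <-> meet a b = bot;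
  negK : forall a, neg (neg a) = a;
  neg_meet : forall a b, neg (meet a b) = join (neg a) (neg b);
  neg_join : forall a b, neg (join a b) = meet (neg a) (neg b)
}.

Arguments meet {_}. Arguments join {_}. Arguments pc {_}. Arguments neg {_}.
Arguments bot {_}. Arguments top {_}.

Section Defs.
Variable L : pmAlgebra.

Definition le (a b : L) : Prop := meet a b = a.

Definition negpc (x : L) : L := pc (neg x).
Fixpoint iter_negpc (k : nat) (x : L) : L :=
  match k with O => x | S k' => negpc (iter_negpc k' x) end.

Definition in_Mn (n : nat) : Prop :=
  (forall x y : L, le (meet x (neg (pc (neg x)))) (join y (pc y))) /\
  (forall x : L, iter_negpc n (meet x (negpc x)) =
                 iter_negpc (S n) (meet x (negpc x))).

Definition congruence (th : L -> L -> Prop) : Prop :=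
  equivalence L th /\
  (forall a b c d, th a b -> th c d -> th (meet a c) (meet b d)) /\
  (forall a b c d, th a b -> th c d -> th (join a c) (join b d)) /\
  (forall a b, th a b -> th (pc a) (pc b)) /\
  (forall a b, th a b -> th (neg a) (neg b)).

Definition simple : Prop :=
  (bot : L) <> top /\
  forall th, congruence th ->
    (forall a b, th a b -> a = b) \/ (forall a b : L, th a b).

(** Prime ideals (points of the dual pm-space), as subsets of L *)
Definition prime_ideal (I : L -> Prop) : Prop :=
  I (bot : L) /\
  (forall a b, le a b -> I b -> I a) /\
  (forall a b, I a -> I b -> I (join a b)) /\
  ~ I (top : L) /\
  (forall a b, I (meet a b) -> I a \/ I b).

Definition zeta (I : L -> Prop) : L -> Prop := fun a => ~ I (neg a).

Definition comparable_pt (I J : L -> Prop) : Prop :=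
  prime_ideal I /\ prime_ideal J /\
  ((forall a, I a -> J a) \/ (forall a, J a -> I a)).

Definition path_connected (I J : L -> Prop) : Prop :=
  clos_refl_trans comparable_pt I J.

Definition order_component (Q : (L -> Prop) -> Prop) : Prop :=
  (exists I, Q I) /\
  (forall I, Q I -> prime_ideal I) /\
  (forall I J, Q I -> Q J -> path_connected I J) /\
  (forall Q' : (L -> Prop) -> Prop,
     (forall I, Q I -> Q' I) ->
     (forall I, Q' I -> prime_ideal I) ->
     (forall I J, Q' I -> Q' J -> path_connected I J) ->
     forall I, Q' I -> Q I).

End Defs.

(* Main.v *)
Require Import Defs.
From Stdlib Require Import Classical Relations FunctionalExtensionality PropExtensionality.
From mathcomp Require classical_sets.

Arguments meetA {_}. Arguments joinA {_}. Arguments meetC {_}. Arguments joinC {_}.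
Arguments meet_join_absorb {_}. Arguments join_meet_absorb {_}. Arguments meet_joinDr {_}.
Arguments join_bot {_}. Arguments meet_top {_}. Arguments pcP {_}. Arguments negK {_}.
Arguments neg_meet {_}. Arguments neg_join {_}.

Section Lat.
Variable L : pmAlgebra.
Implicit Types a b c d x y z : L.

Lemma meetI a : meet a a = a.
Proof.
  rewrite <- (join_meet_absorb a a) at 2.
  apply meet_join_absorb.
Qed.

Lemma joinI a : join a a = a.
Proof.
  rewrite <- (meet_join_absorb a a) at 2.
  apply join_meet_absorb.
Qed.

Lemma meet0 a : meet a bot = bot.
Proof.
  rewrite meetC. rewrite <- (join_bot a) at 1. rewrite joinC. apply meet_join_absorb.
Qed.

Lemma meet0l a : meet bot a = bot.
Proof. rewrite meetC; apply meet0. Qed.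

Lemma join1 a : join a top = top.
Proof.
  rewrite joinC. rewrite <- (meet_top a) at 1. rewrite meetC. apply join_meet_absorb.
Qed.

Lemma join1l a : join top a = top.
Proof. rewrite joinC; apply join1. Qed.

Lemma meet1l a : meet top a = a.
Proof. rewrite meetC; apply meet_top. Qed.

Lemma join0l a : join bot a = a.
Proof. rewrite joinC; apply join_bot. Qed.

Lemma meet_joinDl a b c : meet (join b c) a = join (meet b a) (meet c a).
Proof. rewrite meetC, meet_joinDr, (meetC a b), (meetC a c). reflexivity. Qed.

Lemma neg0 : neg (bot : L) = top.
Proof.
  assert (H : forall x : L, neg x = meet (neg x) (neg bot)).
  { intro x. rewrite <- (neg_join x bot), join_bot. reflexivity. }
  specialize (H (neg top)). rewrite negK, meet1l in H. symmetry; exact H.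
Qed.

Lemma neg1 : neg (top : L) = bot.
Proof. rewrite <- neg0, negK. reflexivity. Qed.



Lemma neg_inj a b : neg a = neg b -> a = b.
Proof. intro H. rewrite <- (negK a), <- (negK b), H. reflexivity. Qed.

Lemma join_meetDr a b c : join a (meet b c) = meet (join a b) (join a c).
Proof.
  apply neg_inj. rewrite (neg_join a), (neg_meet b c), meet_joinDr.
  rewrite (neg_meet (join a b)), (neg_join a b), (neg_join a c). reflexivity.
Qed.

Lemma le_refl a : le L a a.
Proof. apply meetI. Qed.

Lemma le_trans a b c : le L a b -> le L b c -> le L a c.
Proof.
  unfold le; intros H1 H2. rewrite <- H1, <- meetA, H2. reflexivity.
Qed.

Lemma le_antisym a b : le L a b -> le L b a -> a = b.
Proof. unfold le; intros H1 H2. rewrite <- H1, meetC. exact H2. Qed.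

Lemma le_joinE a b : le L a b <-> join a b = b.
Proof.
  unfold le; split; intro H.
  - rewrite <- H, joinC, meetC. apply join_meet_absorb.
  - rewrite <- H. apply meet_join_absorb.
Qed.

Lemma le_meetl a b : le L (meet a b) a.
Proof. unfold le. rewrite (meetC _ a), meetA, meetI. reflexivity. Qed.

Lemma le_meetr a b : le L (meet a b) b.
Proof. rewrite meetC. apply le_meetl. Qed.

Lemma le_joinl a b : le L a (join a b).
Proof. apply meet_join_absorb. Qed.

Lemma le_joinr a b : le L b (join a b).
Proof. rewrite joinC. apply le_joinl. Qed.

Lemma le_meet a b c : le L c a -> le L c b -> le L c (meet a b).
Proof. unfold le; intros H1 H2. rewrite meetA, H1, H2. reflexivity. Qed.

Lemma le_join a b c : le L a c -> le L b c -> le L (join a b) c.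
Proof.
  rewrite !le_joinE; intros H1 H2. rewrite <- joinA, H2, H1. reflexivity.
Qed.

Lemma le0 a : le L bot a.
Proof. apply meet0l. Qed.

Lemma le1 a : le L a top.
Proof. apply meet_top. Qed.

Lemma le_meet2 a b c d : le L a b -> le L c d -> le L (meet a c) (meet b d).
Proof.
  intros H1 H2. apply le_meet.
  - eapply le_trans; [apply le_meetl | exact H1].
  - eapply le_trans; [apply le_meetr | exact H2].
Qed.

Lemma le_join2 a b c d : le L a b -> le L c d -> le L (join a c) (join b d).
Proof.
  intros H1 H2. apply le_join.
  - eapply le_trans; [exact H1 | apply le_joinl].
  - eapply le_trans; [exact H2 | apply le_joinr].
Qed.

Lemma le_bot a : le L a bot -> a = bot.
Proof. unfold le; intro H. rewrite meet0 in H. symmetry; exact H. Qed.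

Lemma neg_anti a b : le L a b -> le L (neg b) (neg a).
Proof.
  intro H. apply le_joinE. rewrite joinC, <- neg_meet, H. reflexivity.
Qed.

Lemma pc_meet a : meet a (pc a) = bot.
Proof. apply (proj1 (pcP a (pc a))). apply meetI. Qed.

Lemma pc_le a b : meet a b = bot -> le L b (pc a).
Proof. intro H. apply (proj2 (pcP a b)). exact H. Qed.

Lemma pc_anti a b : le L a b -> le L (pc b) (pc a).
Proof.
  intro H. apply pc_le. apply le_bot.
  eapply le_trans. apply le_meet2. exact H. apply le_refl.
  rewrite pc_meet. apply le_refl.
Qed.

Lemma pc_join a b : pc (join a b) = meet (pc a) (pc b).
Proof.
  apply le_antisym.
  - apply le_meet; apply pc_anti; [apply le_joinl | apply le_joinr].
  - apply pc_le. rewrite meet_joinDl.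
    rewrite (meetC (pc a) (pc b)) at 2.
    rewrite meetA, pc_meet, meet0l, meetA, pc_meet, meet0l, joinI. reflexivity.
Qed.

Definition f (x : L) : L := negpc L x.

Lemma f_mono a b : le L a b -> le L (f a) (f b).
Proof. intro H. unfold f, negpc. apply pc_anti, neg_anti, H. Qed.

Lemma f_meet a b : f (meet a b) = meet (f a) (f b).
Proof. unfold f, negpc. rewrite neg_meet, pc_join. reflexivity. Qed.

Lemma iterS k x : iter_negpc L (S k) x = iter_negpc L k (negpc L x).
Proof.
  induction k; simpl. reflexivity. simpl in IHk. rewrite IHk. reflexivity.
Qed.

Lemma iter_mono k a b : le L a b -> le L (iter_negpc L k a) (iter_negpc L k b).
Proof. induction k; simpl; intro H; [exact H| apply (f_mono _ _ (IHk H))]. Qed.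

Lemma iter_meet k a b : iter_negpc L k (meet a b) = meet (iter_negpc L k a) (iter_negpc L k b).
Proof. induction k; simpl. reflexivity. rewrite IHk. apply f_meet. Qed.

End Lat.

Section PIT.
Variable L : pmAlgebra.
Variable th : L -> L -> Prop.
Hypothesis thR : forall a, th a a.
Hypothesis thS : forall a b, th a b -> th b a.
Hypothesis thT : forall a b c, th a b -> th b c -> th a c.
Hypothesis thM : forall a b c d, th a b -> th c d -> th (meet a c) (meet b d).
Hypothesis thJ : forall a b c d, th a b -> th c d -> th (join a c) (join b d).
Variables I0 F : L -> Prop.
Hypothesis I0b : I0 bot.
Hypothesis I0d : forall a b, le L a b -> I0 b -> I0 a.
Hypothesis I0j : forall a b, I0 a -> I0 b -> I0 (join a b).
Hypothesis I0s : forall a b, th a b -> I0 a -> I0 b.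
Hypothesis Ft : F top.
Hypothesis Fu : forall a b, le L a b -> F a -> F b.
Hypothesis Fm : forall a b, F a -> F b -> F (meet a b).
Hypothesis disj : forall x, I0 x -> F x -> False.

Definition good (J : L -> Prop) : Prop :=
  (forall a b, le L a b -> J b -> J a) /\
  (forall a b, J a -> J b -> J (join a b)) /\
  (forall a b, th a b -> J a -> J b) /\
  (forall x, J x -> F x -> False).

Definition PP (X : classical_sets.set L) : Prop := good (fun x => X x \/ I0 x).

Lemma chain_good (Fm' : classical_sets.set (classical_sets.set L)) :
  (forall X, Fm' X -> PP X) -> classical_sets.total_on Fm' classical_sets.subset ->
  PP (classical_sets.bigcup Fm' (fun X => X)).
Proof.
  intros HP Htot. unfold PP, good. split; [|split; [|split]].
  - intros a b Hab [[X HX Xb]|Hb].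
    + destruct (HP X HX) as [Hd _]. destruct (Hd a b Hab (or_introl Xb)) as [Xa|Ia].
      * left. exists X; assumption.
      * right; assumption.
    + right. eapply I0d; eassumption.
  - intros a b [[X HX Xa]|Ia] [[Y HY Yb]|Ib].
    + destruct (Htot X Y HX HY) as [HXY|HYX].
      * destruct (HP Y HY) as [_ [Hj _]].
        destruct (Hj a b (or_introl (HXY _ Xa)) (or_introl Yb)) as [Z|Z];
          [left; exists Y; assumption | right; assumption].
      * destruct (HP X HX) as [_ [Hj _]].
        destruct (Hj a b (or_introl Xa) (or_introl (HYX _ Yb))) as [Z|Z];
          [left; exists X; assumption | right; assumption].
    + destruct (HP X HX) as [_ [Hj _]].
      destruct (Hj a b (or_introl Xa) (or_intror Ib)) as [Z|Z];
        [left; exists X; assumption | right; assumption].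
    + destruct (HP Y HY) as [_ [Hj _]].
      destruct (Hj a b (or_intror Ia) (or_introl Yb)) as [Z|Z];
        [left; exists Y; assumption | right; assumption].
    + right; apply I0j; assumption.
  - intros a b Hab [[X HX Xa]|Ia].
    + destruct (HP X HX) as [_ [_ [Hs _]]].
      destruct (Hs a b Hab (or_introl Xa)) as [Z|Z];
        [left; exists X; assumption | right; assumption].
    + right. eapply I0s; eassumption.
  - intros x [[X HX Xx]|Ix] Fx.
    + destruct (HP X HX) as [_ [_ [_ Hd]]]. eapply Hd; [left; exact Xx| exact Fx].
    + eapply disj; eassumption.
Qed.

Lemma PIT : exists K, prime_ideal L K /\ (forall x, I0 x -> K x) /\
  (forall x, F x -> ~ K x) /\ (forall a b, th a b -> K a -> K b).
Proof.
  destruct (@classical_sets.Zorn_bigcup L PP) as [A [HA Hmax]].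
  { intros Fm' HF Htot. apply chain_good; assumption. }
  set (M := fun x => A x \/ I0 x).
  destruct HA as [Md [Mj [Ms Mdisj]]].
  fold M in Md, Mj, Ms, Mdisj.
  assert (Gen : forall x, ~ M x -> exists z, F z /\ exists m, M m /\ th z (meet z (join m x))).
  { intros x Hx. apply NNPP. intro Hno.
    set (G := fun z => exists m, M m /\ th z (meet z (join m x))).
    assert (MG : forall z, M z -> G z).
    { intros z Hz. exists z. split; [exact Hz|].
      rewrite meet_join_absorb. apply thR. }
    assert (GI : forall z, G z \/ I0 z -> G z).
    { intros z [Gz|Iz]; [exact Gz| apply MG; right; exact Iz]. }
    assert (Gd : forall a b, le L a b -> G b -> G a).
    { intros a b Hab [m [Mm Hm]]. exists m. split; [exact Mm|].
      unfold le in Hab. rewrite <- Hab.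
      rewrite <- (meetA a b (join m x)).
      apply thM; [apply thR| exact Hm]. }
    assert (Gj : forall a b, G a -> G b -> G (join a b)).
    { intros a b [m1 [Mm1 H1]] [m2 [Mm2 H2]].
      exists (join m1 m2). split; [apply Mj; assumption|].
      set (w := join (meet a (join m1 x)) (meet b (join m2 x))).
      assert (Hw : th (join a b) w) by (apply thJ; assumption).
      assert (Hle : le L w (join (join m1 m2) x)).
      { apply le_join.
        - eapply le_trans; [apply le_meetr|]. apply le_join2; [apply le_joinl|apply le_refl].
        - eapply le_trans; [apply le_meetr|]. apply le_join2; [apply le_joinr|apply le_refl]. }
      unfold le in Hle.
      eapply thT; [exact Hw|]. rewrite <- Hle.
      apply thM; [apply thS; exact Hw| apply thR]. }
    assert (Gs : forall a b, th a b -> G a -> G b).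
    { intros a b Hab [m [Mm Hm]]. exists m. split; [exact Mm|].
      eapply thT; [apply thS; exact Hab|]. eapply thT; [exact Hm|].
      apply thM; [exact Hab| apply thR]. }
    assert (PG : PP G).
    { unfold PP, good. split; [|split; [|split]].
      - intros a b Hab Hb. left. apply GI in Hb. eapply Gd; eassumption.
      - intros a b Ha Hb. left. apply GI in Ha. apply GI in Hb. apply Gj; assumption.
      - intros a b Hab Ha. left. apply GI in Ha. eapply Gs; eassumption.
      - intros z Hz Fz. apply GI in Hz. apply Hno. exists z. split; assumption. }
    apply (Hmax G); [|exact PG].
    split.
    - intros z Az. apply MG. left; exact Az.
    - intro HGA. apply Hx. left. apply HGA. exists bot. split; [right; exact I0b|].
      rewrite join0l, meetI. apply thR. }
  exists M. split; [|split; [|split]].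
  - unfold prime_ideal. split; [right; exact I0b|]. split; [exact Md|]. split; [exact Mj|].
    split; [intro Mt; eapply Mdisj; [exact Mt| exact Ft]|].
    intros a b Hab. apply NNPP. intro Hn. apply not_or_and in Hn. destruct Hn as [Ha Hb].
    destruct (Gen a Ha) as [z1 [Fz1 [m1 [Mm1 H1]]]].
    destruct (Gen b Hb) as [z2 [Fz2 [m2 [Mm2 H2]]]].
    set (m := join m1 m2).
    assert (Mm : M m) by (apply Mj; assumption).
    set (v := meet (meet z1 (join m1 a)) (meet z2 (join m2 b))).
    assert (Hv : th (meet z1 z2) v) by (apply thM; assumption).
    assert (Hle : le L v (join m (meet a b))).
    { rewrite join_meetDr. apply le_meet2.
      - eapply le_trans; [apply le_meetr|]. apply le_join2; [apply le_joinl| apply le_refl].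
      - eapply le_trans; [apply le_meetr|]. apply le_join2; [apply le_joinr| apply le_refl]. }
    assert (Mv : M v) by (eapply Md; [exact Hle| apply Mj; assumption]).
    eapply Mdisj; [eapply Ms; [apply thS; exact Hv| exact Mv]|].
    apply Fm; assumption.
  - intros x Ix; right; exact Ix.
  - intros x Fx Mx. eapply Mdisj; eassumption.
  - exact Ms.
Qed.


End PIT.

Section Prime.
Variable L : pmAlgebra.
Implicit Types a b c d x y z : L.
Implicit Types I J K : L -> Prop.

Lemma pi_down {I a b} : prime_ideal L I -> le L a b -> I b -> I a.
Proof. intros [_ [H _]]. apply H. Qed.

Lemma pi_join {I a b} : prime_ideal L I -> I a -> I b -> I (join a b).
Proof. intros [_ [_ [H _]]]. apply H. Qed.

Lemma pi_bot {I} : prime_ideal L I -> I bot.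
Proof. intros [H _]. exact H. Qed.

Lemma pi_top {I} : prime_ideal L I -> ~ I top.
Proof. intros [_ [_ [_ [H _]]]]. exact H. Qed.

Lemma pi_prime {I a b} : prime_ideal L I -> I (meet a b) -> I a \/ I b.
Proof. intros [_ [_ [_ [_ H]]]]. apply H. Qed.

Lemma pi_meet_not {I a b} : prime_ideal L I -> ~ I a -> ~ I b -> ~ I (meet a b).
Proof. intros HI Ha Hb Hab. destruct (pi_prime HI Hab); contradiction. Qed.

Lemma pi_pc {I} a : prime_ideal L I -> I a \/ I (pc a).
Proof. intro HI. apply (pi_prime HI). rewrite pc_meet. apply (pi_bot HI). Qed.

Lemma zeta_prime {I} : prime_ideal L I -> prime_ideal L (zeta L I).
Proof.
  intro HI. unfold zeta. split; [|split; [|split; [|split]]].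
  - rewrite neg0. apply (pi_top HI).
  - intros a b Hab Hb Ha. apply Hb. eapply pi_down; [exact HI| apply neg_anti, Hab| exact Ha].
  - intros a b Ha Hb. rewrite neg_join. apply (pi_meet_not HI); assumption.
  - intro H. apply H. rewrite neg1. apply (pi_bot HI).
  - intros a b Hab. rewrite neg_meet in Hab.
    apply NNPP. intro Hn. apply not_or_and in Hn. destruct Hn as [Ha Hb].
    apply Hab. apply (pi_join HI); apply NNPP; assumption.
Qed.

Lemma zeta_anti I J : (forall a, J a -> I a) -> forall a, zeta L I a -> zeta L J a.
Proof. unfold zeta. intros H a Ha HJ. apply Ha, H, HJ. Qed.

Lemma zetaK I a : zeta L (zeta L I) a <-> I a.
Proof. unfold zeta. rewrite negK. split; [apply NNPP| tauto]. Qed.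

Lemma zeta_neg I a : zeta L I (neg a) <-> ~ I a.
Proof. unfold zeta. rewrite negK. tauto. Qed.

Lemma f_zeta K z : prime_ideal L K -> K z -> zeta L K (f L z).
Proof.
  intros HK Kz. unfold f, negpc.
  destruct (pi_pc (neg z) (zeta_prime HK)) as [H|H]; [|exact H].
  apply (proj1 (zeta_neg K z)) in H. exfalso; apply H; exact Kz.
Qed.

Lemma ff K z : prime_ideal L K -> K z -> K (f L (f L z)).
Proof.
  intros HK Kz. apply zetaK. apply f_zeta; [apply zeta_prime, HK|]. apply f_zeta; assumption.
Qed.

Lemma iter_in K z n : prime_ideal L K -> K z -> K (f L z) -> K (iter_negpc L n z).
Proof.
  intros HK. revert z. induction n; intros z H1 H2; [exact H1|].
  rewrite iterS. apply IHn; [exact H2|]. apply ff; assumption.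
Qed.

Definition SM K := forall y, K y -> ~ K (pc y).

Lemma reg_SM n J I x : in_Mn L n -> prime_ideal L J -> prime_ideal L I ->
  (forall a, J a -> I a) -> I x -> ~ J x -> SM J.
Proof.
  intros [HR _] HJ HI HJI Ix Jx y Jy Jpy.
  assert (H1 : J (join y (pc y))) by (apply (pi_join HJ); assumption).
  assert (H2 : J (meet x (neg (pc (neg x))))) by (eapply pi_down; [exact HJ| apply HR| exact H1]).
  destruct (pi_prime HJ H2) as [H3|H3]; [contradiction|].
  assert (Z : zeta L I (pc (neg x))).
  { destruct (pi_pc (neg x) (zeta_prime HI)) as [H|H]; [|exact H].
    apply (proj1 (zeta_neg I x)) in H. exfalso; apply H; exact Ix. }
  apply Z. apply HJI. exact H3.
Qed.

Definition resp (th : L -> L -> Prop) K := forall a b, th a b -> (K a <-> K b).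

Lemma resp_zeta {th K} : congruence L th -> resp th K -> resp th (zeta L K).
Proof.
  intros [_ [_ [_ [_ Hn]]]] HK a b Hab. unfold zeta.
  specialize (HK _ _ (Hn _ _ Hab)). tauto.
Qed.

Lemma resp_unzeta th K : congruence L th -> resp th (zeta L K) -> resp th K.
Proof.
  intros Hc HK a b Hab. pose proof (resp_zeta Hc HK a b Hab) as H.
  rewrite !zetaK in H. exact H.
Qed.

Lemma resp_down th K K' : congruence L th -> prime_ideal L K -> prime_ideal L K' ->
  (forall a, K' a -> K a) -> resp th K -> forall d, th d bot -> K' d.
Proof.
  intros [_ [_ [_ [Hp _]]]] HK HK' Hsub Hr d Hd.
  specialize (Hp _ _ Hd).
  assert (pcb : pc (bot : L) = top).
  { apply le_antisym; [apply le1| apply pc_le; apply meet0l]. }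
  rewrite pcb in Hp.
  assert (Hn : ~ K (pc d)) by (intro H0; apply (pi_top HK); apply (Hr _ _ Hp); exact H0).
  destruct (pi_pc d HK') as [H|H]; [exact H|]. exfalso. apply Hn, Hsub, H.
Qed.

Lemma resp_SM th K : congruence L th -> prime_ideal L K -> SM K ->
  (forall d, th d bot -> K d) -> resp th K.
Proof.
  intros Hc HK HSM Hker.
  destruct Hc as [[Hrf Htr Hsy] [Hm [_ [Hp _]]]].
  assert (One : forall a b, th a b -> K a -> K b).
  { intros a b Hab Ka. apply NNPP. intro Kb.
    assert (Kpb : K (pc b)) by (destruct (pi_pc b HK); [contradiction| assumption]).
    assert (nKpa : ~ K (pc a)) by (apply HSM, Ka).
    assert (nKppb : ~ K (pc (pc b))) by (apply HSM, Kpb).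
    apply (pi_meet_not HK nKpa nKppb).
    apply Hker.
    rewrite <- (pc_meet L (pc b)).
    apply Hm; [apply Hp; exact Hab| apply Hrf]. }
  intros a b Hab. split; apply One; [exact Hab| apply Hsy; exact Hab].
Qed.

End Prime.

Section Main.
Variable L : pmAlgebra.
Implicit Types a b c d x y z : L.
Implicit Types I J K : L -> Prop.

Lemma PIT_eq (I0 F : L -> Prop) : I0 bot -> (forall a b, le L a b -> I0 b -> I0 a) ->
  (forall a b, I0 a -> I0 b -> I0 (join a b)) -> F top ->
  (forall a b, F a -> F b -> F (meet a b)) -> (forall x, I0 x -> F x -> False) ->
  exists K, prime_ideal L K /\ (forall x, I0 x -> K x) /\ (forall x, F x -> ~ K x).
Proof.
  intros H1 H2 H3 H4 H5 H6.
  destruct (@PIT L eq (fun a => eq_refl) (fun a b H => eq_sym H)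
     (fun a b c H H' => eq_trans H H')
     (fun a b c d H H' => f_equal2 meet H H')
     (fun a b c d H H' => f_equal2 join H H') I0 F H1 H2 H3
     (fun a b H Ha => eq_ind a I0 Ha b H) H4 H5 H6) as [K [HK [HI [HF _]]]].
  exists K; auto.
Qed.

Lemma resp_sub n th I J : in_Mn L n -> congruence L th -> prime_ideal L I -> prime_ideal L J ->
  (forall a, J a -> I a) -> resp L th I -> resp L th J.
Proof.
  intros HL Hc HI HJ Hsub Hr.
  destruct (classic (forall a, I a -> J a)) as [Hs|Hs].
  - intros a b Hab. specialize (Hr a b Hab). split; intro H.
    + apply Hs. apply (proj1 Hr). apply Hsub, H.
    + apply Hs. apply (proj2 Hr). apply Hsub, H.
  - apply not_all_ex_not in Hs. destruct Hs as [x Hx].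
    apply imply_to_and in Hx. destruct Hx as [Ix Jx].
    apply (resp_SM L th J Hc HJ).
    + exact (reg_SM L n J I x HL HJ HI Hsub Ix Jx).
    + exact (resp_down L th I J Hc HI HJ Hsub Hr).
Qed.

Lemma resp_comp n th I J : in_Mn L n -> congruence L th -> comparable_pt L I J ->
  resp L th I -> resp L th J.
Proof.
  intros HL Hc [HI [HJ [H|H]]] Hr.
  - apply resp_unzeta; [exact Hc|].
    apply (resp_sub n th (zeta L I) (zeta L J) HL Hc).
    + apply zeta_prime, HI.
    + apply zeta_prime, HJ.
    + apply zeta_anti, H.
    + apply resp_zeta; assumption.
  - exact (resp_sub n th I J HL Hc HI HJ H Hr).
Qed.

Lemma resp_path n th I J : in_Mn L n -> congruence L th -> path_connected L I J ->
  resp L th I -> resp L th J.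
Proof.
  intros HL Hc Hp. induction Hp; intro Hr.
  - eapply resp_comp; eassumption.
  - exact Hr.
  - auto.
Qed.

Lemma comp_sym I J : comparable_pt L I J -> comparable_pt L J I.
Proof. intros [H1 [H2 [H|H]]]; split; auto; split; auto. Qed.

Lemma path_sym I J : path_connected L I J -> path_connected L J I.
Proof.
  intro H. induction H.
  - apply rt_step, comp_sym; assumption.
  - apply rt_refl.
  - eapply rt_trans; eassumption.
Qed.

Lemma path_prime I J : path_connected L I J -> prime_ideal L I -> prime_ideal L J.
Proof.
  intro H. induction H; intro HI; auto. destruct H as [_ [H _]]; exact H.
Qed.

Lemma comp_zz K : prime_ideal L K -> comparable_pt L K (zeta L (zeta L K)).
Proof.
  intro HK. split; [exact HK|]. split; [apply zeta_prime, zeta_prime, HK|].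
  left. intros a Ha. apply zetaK, Ha.
Qed.

Lemma comp_zeta A B : comparable_pt L A B -> comparable_pt L (zeta L A) (zeta L B).
Proof.
  intros [HA [HB H]]. split; [apply zeta_prime, HA|]. split; [apply zeta_prime, HB|].
  destruct H as [H|H].
  - right. apply zeta_anti, H.
  - left. apply zeta_anti, H.
Qed.

Lemma path_zeta A B : path_connected L A B -> path_connected L (zeta L A) (zeta L B).
Proof.
  intro H. induction H.
  - apply rt_step, comp_zeta; assumption.
  - apply rt_refl.
  - eapply rt_trans; eassumption.
Qed.

Lemma back n Q : in_Mn L n -> order_component L Q ->
  (forall I, prime_ideal L I <-> (Q I \/ exists J, Q J /\ I = zeta L J)) -> simple L.
Proof.
  intros HL [[I0 HQ0] [HQp [HQc _]]] HP. split.
  { intro Hbt. pose proof (HQp _ HQ0) as HI0.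
    apply (pi_top L HI0). rewrite <- Hbt. apply (pi_bot L HI0). }
  intros th Hc.
  destruct (classic (forall a b, th a b -> a = b)) as [H|H]; [left; exact H| right].
  pose proof Hc as [[Hrf Htr Hsy] [Hm [Hj _]]].
  assert (H01 : th bot top).
  { apply NNPP; intro Hn.
    destruct (@PIT L th) with (I0 := fun x => th x bot) (F := fun x => th x top)
      as [K [HK [_ [_ Ksat]]]]; auto.
    - intros a b Hab Hb. unfold le in Hab. rewrite <- Hab.
      rewrite <- (meet0 L a). apply Hm; [apply Hrf| exact Hb].
    - intros a b Ha Hb. rewrite <- (joinI L bot). apply Hj; assumption.
    - intros a b Hab Ha. eapply Htr; [apply Hsy; exact Hab| exact Ha].
    - intros a b Ha Hb. rewrite <- (meetI L top). apply Hm; assumption.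
    - intros x Hx1 Hx2. apply Hn. eapply Htr; [apply Hsy; exact Hx1| exact Hx2].
    - assert (RK : resp L th K).
      { intros a b Hab. split; apply Ksat; [exact Hab| apply Hsy; exact Hab]. }
      assert (HJ0 : exists J0, Q J0 /\ resp L th J0).
      { destruct (proj1 (HP K) HK) as [HQK|[J [HQJ HKJ]]].
        - exists K; auto.
        - exists J. split; [exact HQJ|]. apply resp_unzeta; [exact Hc|]. rewrite <- HKJ. exact RK. }
      destruct HJ0 as [J0 [HQJ0 RJ0]].
      assert (RQ : forall J, Q J -> resp L th J).
      { intros J HJ. eapply resp_path; [exact HL| exact Hc| apply HQc; [exact HQJ0| exact HJ]| exact RJ0]. }
      assert (Rall : forall J, prime_ideal L J -> resp L th J).
      { intros J HJ. destruct (proj1 (HP J) HJ) as [HQJ|[J' [HQJ' ->]]].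
        - apply RQ, HQJ.
        - apply resp_zeta; [exact Hc| apply RQ, HQJ']. }
      apply not_all_ex_not in H. destruct H as [a H].
      apply not_all_ex_not in H. destruct H as [b H].
      apply imply_to_and in H. destruct H as [Hab Hne].
      assert (Sep : forall a b, th a b -> ~ le L b a -> False).
      { intros a' b' Hab' Hnle.
        destruct (PIT_eq (fun x => le L x a') (fun x => le L b' x)) as [K1 [HK1 [H1 H2]]].
        - apply le0.
        - intros u v Huv Hv. eapply le_trans; eassumption.
        - intros u v Hu Hv. apply le_join; assumption.
        - apply le1.
        - intros u v Hu Hv. apply le_meet; assumption.
        - intros x Hx1 Hx2. apply Hnle. eapply le_trans; eassumption.
        - apply (H2 b' (le_refl L b')). apply (Rall K1 HK1 a' b' Hab'). apply H1, le_refl. }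
      destruct (classic (le L b a)) as [Hba|Hba].
      + destruct (classic (le L a b)) as [Hab2|Hab2].
        * apply Hne, le_antisym; assumption.
        * apply (Sep b a); [apply Hsy; exact Hab| exact Hab2].
      + apply (Sep a b); assumption. }
  assert (Hc0 : forall c, th c bot).
  { intro c. rewrite <- (meet_top c) at 1. rewrite <- (meet0 L c).
    apply Hm; [apply Hrf| apply Hsy; exact H01]. }
  intros c d. eapply Htr; [apply Hc0| apply Hsy, Hc0].
Qed.

End Main.

Section Fwd.
Variable L : pmAlgebra.
Implicit Types a b c d x y z : L.
Implicit Types I J K : L -> Prop.



Lemma e01 e : simple L -> negpc L e = e -> e = bot \/ e = top.
Proof.
  intros [_ HS] He.
  set (th := fun a b : L => meet a e = meet b e).
  assert (Hb : meet (neg e) e = bot).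
  { rewrite <- He at 2. unfold negpc. apply pc_meet. }
  assert (mm : forall a c, meet (meet a c) e = meet (meet a e) (meet c e)).
  { intros a c. apply le_antisym.
    - apply le_meet.
      + apply le_meet2; [apply le_meetl| apply le_refl].
      + apply le_meet2; [apply le_meetr| apply le_refl].
    - apply le_meet.
      + apply le_meet2; apply le_meetl.
      + eapply le_trans; [apply le_meetr| apply le_meetr]. }
  assert (pe : forall a, meet (pc a) e = meet (pc (meet a e)) e).
  { intro a. apply le_antisym.
    - apply le_meet; [|apply le_meetr].
      eapply le_trans; [apply le_meetl| apply pc_anti, le_meetl].
    - apply le_meet; [|apply le_meetr].
      apply pc_le. apply le_bot.
      eapply le_trans; [| apply le_refl].
      rewrite <- (pc_meet L (meet a e)).
      apply le_meet.
      + apply le_meet; [apply le_meetl|].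
        eapply le_trans; [apply le_meetr| apply le_meetr].
      + eapply le_trans; [apply le_meetr| apply le_meetl]. }
  assert (ne : forall a, meet (neg a) e = meet (neg (meet a e)) e).
  { intro a. rewrite neg_meet, meet_joinDl, Hb, join_bot. reflexivity. }
  assert (Hc : congruence L th).
  { unfold th. split; [|split; [|split; [|split]]].
    - split.
      + intro a; reflexivity.
      + intros a b c H1 H2. rewrite H1; exact H2.
      + intros a b H1; symmetry; exact H1.
    - intros a b c d H1 H2. rewrite !mm, H1, H2. reflexivity.
    - intros a b c d H1 H2. rewrite !meet_joinDl, H1, H2. reflexivity.
    - intros a b H1. rewrite pe, H1, <- pe. reflexivity.
    - intros a b H1. rewrite ne, H1, <- ne. reflexivity. }
  destruct (HS th Hc) as [Hid|Hall].
  - right. apply Hid. unfold th. rewrite meetI, meet1l. reflexivity.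
  - left. pose proof (Hall bot top) as H. unfold th in H.
    rewrite meet0l, meet1l in H. symmetry; exact H.
Qed.

Definition Yc I K := path_connected L I K \/ path_connected L I (zeta L K).

Lemma Y_zeta I K : prime_ideal L K -> Yc I K -> Yc I (zeta L K).
Proof.
  intros HK [H|H].
  - right. eapply rt_trans; [exact H| apply rt_step, comp_zz, HK].
  - left. exact H.
Qed.

Lemma Y_comp I K K' : comparable_pt L K K' -> Yc I K -> Yc I K'.
Proof.
  intros Hc [H|H].
  - left. eapply rt_trans; [exact H| apply rt_step, Hc].
  - right. eapply rt_trans; [exact H| apply rt_step, comp_zeta, Hc].
Qed.

Lemma walk I k : forall I' J, prime_ideal L I' -> Yc I I' -> prime_ideal L J ->
  (forall x, J x -> I' (iter_negpc L k x)) ->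
  exists K, prime_ideal L K /\ Yc I K /\ (forall y, J y -> K y).
Proof.
  induction k as [|k IH]; intros I' J HI' HY HJ Hw.
  - exists I'. auto.
  - destruct (PIT_eq L (fun z => z = bot)
      (fun z => exists u, ~ I' u /\ exists x, J x /\ le L (meet u (neg (iter_negpc L k x))) z))
      as [K' [HK' [_ HF]]].
    + reflexivity.
    + intros a b Hab Hb. subst. apply le_bot, Hab.
    + intros a b Ha Hb. subst. apply joinI.
    + exists top. split; [apply (pi_top L HI')|]. exists bot. split; [apply (pi_bot L HJ)| apply le1].
    + intros a b [u1 [Hu1 [x1 [Hx1 H1]]]] [u2 [Hu2 [x2 [Hx2 H2]]]].
      exists (meet u1 u2). split; [apply (pi_meet_not L HI'); assumption|].
      exists (join x1 x2). split; [apply (pi_join L HJ); assumption|].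
      apply le_meet.
      * eapply le_trans; [|exact H1]. apply le_meet2; [apply le_meetl|].
        apply neg_anti, iter_mono, le_joinl.
      * eapply le_trans; [|exact H2]. apply le_meet2; [apply le_meetr|].
        apply neg_anti, iter_mono, le_joinr.
    + intros z Hz [u [Hu [x [Hx Hle]]]]. subst z.
      apply Hu. eapply (pi_down L HI'); [| apply (Hw x Hx)].
      simpl. unfold negpc. apply pc_le. rewrite meetC. apply le_bot, Hle.
    + assert (Hsub : forall u, K' u -> I' u).
      { intros u Ku. apply NNPP. intro Hu. apply (HF u); [|exact Ku].
        exists u. split; [exact Hu|]. exists bot. split; [apply (pi_bot L HJ)| apply le_meetl]. }
      assert (HYK : Yc I (zeta L K')).
      { apply Y_zeta; [exact HK'|]. eapply Y_comp; [|exact HY].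
        split; [exact HI'|]. split; [exact HK'|]. right; exact Hsub. }
      apply (IH (zeta L K') J (zeta_prime L HK') HYK HJ).
      intros x Hx Kx. refine (HF _ _ Kx). exists top. split; [apply (pi_top L HI')|].
      exists x. split; [exact Hx|]. rewrite meet1l. apply le_refl.
Qed.

End Fwd.

Section Fwd2.
Variable L : pmAlgebra.
Implicit Types a b c d x y z : L.
Implicit Types I J K : L -> Prop.

Lemma zz_eq I : I = zeta L (zeta L I).
Proof.
  apply functional_extensionality. intro a. apply propositional_extensionality.
  split; apply zetaK.
Qed.

Lemma fwd n : in_Mn L n -> simple L -> exists Q : (L -> Prop) -> Prop,
    order_component L Q /\
    (forall I : L -> Prop,
       prime_ideal L I <-> (Q I \/ exists J, Q J /\ I = zeta L J)).
Proof.
  intros HL HS.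
  destruct (PIT_eq L (fun z => z = bot) (fun z => z = top)) as [I0 [HI0 [_ _]]].
  - reflexivity.
  - intros a b Hab Hb. subst. apply le_bot, Hab.
  - intros a b Ha Hb. subst. apply joinI.
  - reflexivity.
  - intros a b Ha Hb. subst. apply meetI.
  - intros x H1 H2. apply (proj1 HS). rewrite <- H1, H2. reflexivity.
  - exists (fun I => path_connected L I0 I). split.
    + split; [exists I0; apply rt_refl|]. split; [intros I H; eapply path_prime; eassumption|].
      split.
      * intros I J H1 H2. eapply rt_trans; [apply path_sym, H1| exact H2].
      * intros Q' HQ' _ HQc I HI. apply HQc; [apply HQ', rt_refl| exact HI].
    + intro I. split.
      2:{ intros [H|[J [H ->]]].
          - eapply path_prime; eassumption.
          - apply zeta_prime. eapply path_prime; eassumption. }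
      intro HI.
      destruct (classic (path_connected L I0 I)) as [Q1|Q1]; [left; exact Q1|].
      destruct (classic (path_connected L I0 (zeta L I))) as [Q2|Q2].
      { right. exists (zeta L I). split; [exact Q2| apply zz_eq]. }
      exfalso.
      assert (Hx : exists x, I0 x /\ ~ I (iter_negpc L n x) /\ ~ I (iter_negpc L n (negpc L x))).
      { apply NNPP. intro Hno.
        assert (Hall : forall x, I0 x -> I (iter_negpc L n x) \/ I (iter_negpc L n (negpc L x))).
        { intros x Hx. apply NNPP. intro Hn. apply not_or_and in Hn. apply Hno. exists x. tauto. }
        assert (Hcase : (forall x, I0 x -> I (iter_negpc L n x)) \/
                        (forall x, I0 x -> I (iter_negpc L (S n) x))).
        { apply NNPP. intro Hn. apply not_or_and in Hn. destruct Hn as [N1 N2].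
          apply not_all_ex_not in N1. destruct N1 as [x1 N1]. apply imply_to_and in N1.
          apply not_all_ex_not in N2. destruct N2 as [x2 N2]. apply imply_to_and in N2.
          destruct N1 as [I1 N1]. destruct N2 as [I2 N2]. rewrite iterS in N2.
          destruct (Hall (join x1 x2) (pi_join L HI0 I1 I2)) as [H|H].
          - apply N1. eapply (pi_down L HI); [| exact H]. apply iter_mono, le_joinl.
          - apply N2. eapply (pi_down L HI); [| exact H]. apply iter_mono, f_mono, le_joinr. }
        assert (HW : exists K, prime_ideal L K /\ Yc L I K /\ (forall y, I0 y -> K y)).
        { destruct Hcase as [Hc|Hc].
          - exact (walk L I n I I0 HI (or_introl (rt_refl _ _ _)) HI0 Hc).
          - exact (walk L I (S n) I I0 HI (or_introl (rt_refl _ _ _)) HI0 Hc). }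
        destruct HW as [K [HK [HYK HsubK]]].
        assert (HY0 : Yc L I I0).
        { eapply Y_comp; [|exact HYK]. split; [exact HK|]. split; [exact HI0|]. right; exact HsubK. }
        destruct HY0 as [P1|P1].
        - apply Q1, path_sym, P1.
        - apply Q2. apply path_sym. apply path_zeta in P1.
          eapply rt_trans; [exact P1|]. apply rt_step. apply comp_sym, comp_zz, HI0. }
      destruct Hx as [x [Ix [N1 N2]]].
      set (e := iter_negpc L n (meet x (negpc L x))).
      assert (He : negpc L e = e).
      { unfold e. symmetry. apply (proj2 HL). }
      assert (Hem : e = meet (iter_negpc L n x) (iter_negpc L n (negpc L x))) by apply iter_meet.
      assert (nIe : ~ I e) by (rewrite Hem; apply (pi_meet_not L HI); assumption).
      assert (I0e : I0 e).
      { apply iter_in; [exact HI0| |].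
        - eapply (pi_down L HI0); [apply le_meetl| exact Ix].
        - apply zetaK. apply f_zeta; [apply zeta_prime, HI0|].
          eapply (pi_down L (zeta_prime L HI0)); [apply le_meetr|].
          apply f_zeta; assumption. }
      destruct (e01 L e HS He) as [E|E].
      * apply nIe. rewrite E. apply (pi_bot L HI).
      * apply (pi_top L HI0). rewrite <- E. exact I0e.
Qed.

End Fwd2.

Theorem theorem4p2 (n : nat) (L : pmAlgebra) (HL : in_Mn L n) :
  simple L <->
  exists Q : (L -> Prop) -> Prop,
    order_component L Q /\
    (forall I : L -> Prop,
       prime_ideal L I <-> (Q I \/ exists J, Q J /\ I = zeta L J)).
Proof.
  split.
  - apply fwd with n; exact HL.
  - intros [Q [H1 H2]]. exact (back L n Q HL H1 H2).
Qed.
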